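(* Let $\alpha,\beta\in\mathbb{C}$ be not both zero, $\ell(x,y)=\alpha x+\beta y$, $H(x,y)=\tfrac12 a_1x^2+a_2xy+\tfrac12 a_3y^2+a_4x+a_5y$, and let $\Phi_f$ be the Kahan map (step $1$) of the vector field $f=\ell\,(\partial H/\partial y,\,-\partial H/\partial x)^T$. Let $\gamma_1=a_2^2-a_1a_3$, $c=\gamma_1^{-1/2}$, $\gamma_2=a_3a_4^2+a_1a_5^2-2a_2a_4a_5$, $C=H-\tfrac12\gamma_2\ell^2$, $D=1-\gamma_1\ell^2$, and consider the pencil of conics $C(x,y)-\lambda D(x,y)=0$, with $C(x,y)=0$ nonsingular. Then, generically, the map $\Phi_f$, considered as a birational map $\mathbb{C}P^2\dashrightarrow\mathbb{C}P^2$, has three singular points $B_1,B_3,B_0$, lying on the lines $\ell(x,y)=-c$, $\ell(x,y)=c$ and $\ell(x,y)=0$ respectively; and $\Phi_f^{-1}$ has three singular points $B_2,B_4,B_5$, lying on the lines $\ell(x,y)=-c$, $\ell(x,y)=c$ and $\ell(x,y)=0$ respectively. The points $B_1,B_2,B_3,B_4$ are the base points of the pencil, and $$B_0=\tfrac12(B_2+B_4),\qquad B_5=\tfrac12(B_1+B_3).$$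
   Context: Kahan discretization: for a quadratic vector field $f(x)=Q(x)+Bx+c$ on $\mathbb{C}^n$, the Kahan map $\widetilde x=\Phi_f(x)$ (step $1$) is defined by $\frac{\widetilde x-x}{2}=Q(x,\widetilde x)+\frac12B(x+\widetilde x)+c$ with $Q(x,\widetilde x)=\frac12(Q(x+\widetilde x)-Q(x)-Q(\widetilde x))$; equivalently $\Phi_f(x)=x+2(I-f'(x))^{-1}f(x)$. It is birational with $\Phi_f^{-1}=\Phi_{-f}$. In the planar case $\Phi_f=(R/T,S/T)$ with polynomials $R,S,T$ of degree 2; singular points of the birational map are its points of indeterminacy, i.e. the common zeros of the components of its homogenized representation (in the affine part, the common zeros of $R,S,T$). Base points of a pencil of conics are the points common to all its conics. *)

(* Defs.v *)
(* The field of complex numbers is modelled as R[i]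
   (mathcomp-real-closed's [complex R]) for an arbitrary [R : realType]. *)
From HB Require Import structures.
From mathcomp Require Import all_boot all_algebra.
From mathcomp Require Export reals complex.
From mathcomp Require Export mpoly.

Set Implicit Arguments.
Unset Strict Implicit.
Unset Printing Implicit Defensive.

Import GRing.Theory.
Local Open Scope ring_scope.

Section Kahan.
Variable C : fieldType.

Definition vadd (u v : C * C) : C * C := (u.1 + v.1, u.2 + v.2).
Definition vscale (a : C) (u : C * C) : C * C := (a * u.1, a * u.2).

(* A planar quadratic vector field  f(x) = Q(x) + B x + c  is given by its
   quadratic part Q (a quadratic form C^2 -> C^2), its linear part B and its
   constant part c. *)

Definition polar (Q : C * C -> C * C) (u v : C * C) : C * C :=
  vscale (2^-1) (vadd (Q (vadd u v)) (vscale (-1) (vadd (Q u) (Q v)))).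

(* The Kahan equation (x~ - x)/2 = Q(x,x~) + 1/2 B(x + x~) + c is the linear
   system  L(x) x~ = r(x)  with  L(x) w = w - 2 Q(x,w) - B w  and
   r(x) = x + B x + 2 c.  By Cramer's rule  Phi_f = (R/T, S/T)  with
   T = det L(x),  (R,S) = adj L(x) r(x), all of degree 2.
   Below: the homogenised (degree 2, homogenising variable z) versions. *)
Definition kahan_Lh (Q B : C * C -> C * C) (x y z : C) (w : C * C) : C * C :=
  vadd (vscale z w)
       (vscale (-1) (vadd (vscale 2 (polar Q (x, y) w)) (vscale z (B w)))).

Definition kahan_rh (B : C * C -> C * C) (c : C * C) (x y z : C) : C * C :=
  vadd (x, y) (vadd (B (x, y)) (vscale (2 * z) c)).

Definition kahan_hom (Q B : C * C -> C * C) (c : C * C) (x y z : C)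
  : C * C * C :=
  let L1 := kahan_Lh Q B x y z (1, 0) in
  let L2 := kahan_Lh Q B x y z (0, 1) in
  let r := kahan_rh B c x y z in
  (L2.2 * r.1 - L2.1 * r.2,
   - L1.2 * r.1 + L1.1 * r.2,
   L1.1 * L2.2 - L2.1 * L1.2).

Definition kahan_singular (Q B : C * C -> C * C) (c : C * C) (x y z : C)
  : Prop :=
  let v := kahan_hom Q B c x y z in v.1.1 = 0 /\ v.1.2 = 0 /\ v.2 = 0.

Definition proj_is (p : C * C) (x y z : C) : Prop :=
  exists t : C, t != 0 /\ x = t * p.1 /\ y = t * p.2 /\ z = t.

Variables (al be a1 a2 a3 a4 a5 : C).

Definition ell (p : C * C) : C := al * p.1 + be * p.2.

Definition Ham (p : C * C) : C :=
  2^-1 * a1 * p.1 ^+ 2 + a2 * p.1 * p.2 + 2^-1 * a3 * p.2 ^+ 2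
  + a4 * p.1 + a5 * p.2.

(* f = ell * (dH/dy, -dH/dx) = Q(x) + B x + 0, with
   dH/dx = a1 x + a2 y + a4,  dH/dy = a2 x + a3 y + a5 *)
Definition fQ (p : C * C) : C * C :=
  (ell p * (a2 * p.1 + a3 * p.2), - (ell p * (a1 * p.1 + a2 * p.2))).
Definition fB (p : C * C) : C * C := (ell p * a5, - (ell p * a4)).
Definition fc : C * C := (0, 0).

Definition fvec (p : C * C) : C * C := vadd (fQ p) (vadd (fB p) fc).

Definition mfQ (p : C * C) : C * C := vscale (-1) (fQ p).
Definition mfB (p : C * C) : C * C := vscale (-1) (fB p).
Definition mfc : C * C := vscale (-1) fc.

Definition gamma1 : C := a2 ^+ 2 - a1 * a3.
Definition gamma2 : C := a3 * a4 ^+ 2 + a1 * a5 ^+ 2 - 2 * a2 * a4 * a5.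

Definition conC (p : C * C) : C := Ham p - 2^-1 * gamma2 * ell p ^+ 2.
Definition conD (p : C * C) : C := 1 - gamma1 * ell p ^+ 2.

Definition conCh (x y z : C) : C :=
  2^-1 * a1 * x ^+ 2 + a2 * x * y + 2^-1 * a3 * y ^+ 2
  + a4 * x * z + a5 * y * z - 2^-1 * gamma2 * ell (x, y) ^+ 2.
Definition conDh (x y z : C) : C := z ^+ 2 - gamma1 * ell (x, y) ^+ 2.

Definition conCh_x (x y z : C) : C :=
  a1 * x + a2 * y + a4 * z - gamma2 * al * ell (x, y).
Definition conCh_y (x y z : C) : C :=
  a2 * x + a3 * y + a5 * z - gamma2 * be * ell (x, y).
Definition conCh_z (x y z : C) : C := a4 * x + a5 * y.

Definition conC_nonsingular : Prop :=
  forall x y z : C, (x, y, z) != (0, 0, 0) ->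
    ~ [/\ conCh x y z = 0, conCh_x x y z = 0, conCh_y x y z = 0
        & conCh_z x y z = 0].

Definition params : 'I_7 -> C :=
  fun i => nth 0 [:: al; be; a1; a2; a3; a4; a5] i.

End Kahan.

(* Main.v *)
Require Import Defs.
From HB Require Import structures.
From mathcomp Require Import all_boot all_algebra.
From mathcomp Require Import reals complex.
From mathcomp Require Import mpoly.
From mathcomp Require Import ring.
Import GRing.Theory Num.Theory.
Local Open Scope ring_scope.

Definition uF {F : fieldType} (al be x y : F) := al * x + be * y.
Definition r1F {F : fieldType} (al be a1 a2 : F) := al * a2 - be * a1.
Definition r2F {F : fieldType} (al be a2 a3 : F) := al * a3 - be * a2.
Definition mF {F : fieldType} (al be a1 a2 a3 x y : F) :=
  r1F al be a1 a2 * x + r2F al be a2 a3 * y.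
Definition kF {F : fieldType} (al be a4 a5 : F) := al * a5 - be * a4.
Definition qF {F : fieldType} (al be a1 a2 a3 a4 a5 : F) :=
  al * (a2 * a5 - a3 * a4) + be * (a2 * a4 - a1 * a5).
Definition dlF {F : fieldType} (al be a1 a2 a3 : F) :=
  al * r2F al be a2 a3 - be * r1F al be a1 a2.
Definition ptF {F : fieldType} (al be a1 a2 a3 u0 m0 : F) : F * F :=
  ((u0 * r2F al be a2 a3 - be * m0) / dlF al be a1 a2 a3,
   (al * m0 - r1F al be a1 a2 * u0) / dlF al be a1 a2 a3).

Section Alg.
Variable F : numFieldType.

Lemma sing_solve (k q g c u m z : F) :
  c ^+ 2 * g = 1 -> ~ (u = 0 /\ m = 0 /\ z = 0) ->
  (u * (z * (1 + k) + m + u * q) = 0 /\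
   (z * (1 - k) - m) * (m + u * q) + 2 * g * u ^+ 2 * (1 + k) + z * u * (1 + k) * q = 0 /\
   z ^+ 2 * (1 - k) - z * m - z * u * q - 2 * g * u ^+ 2 = 0)
  <-> [\/ z != 0 /\ u = - c * z /\ m = - (1 + k - c * q) * z,
          z != 0 /\ u = c * z /\ m = - (1 + k + c * q) * z
        | z != 0 /\ u = 0 /\ m = (1 - k) * z].
Proof.
move=> hc hnz.
have c0 : c != 0 by apply/eqP=> c0; move: hc; rewrite c0 expr0n /= mul0r => /eqP; rewrite eq_sym oner_eq0.
have hg : g = c ^-2 by apply: (mulfI (expf_neq0 2 c0)); rewrite hc mulfV // expf_neq0.
subst g.
split.
- case=> [H1 [H2 H3]].
  have [u0|u0] := eqVneq u 0.
  + subst u.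
    have e3 : z * (z * (1 - k) - m) = 0 by rewrite -H3; ring.
    have e2 : (z * (1 - k) - m) * m = 0 by rewrite -H2; ring.
    have [w0|w0] := eqVneq (z * (1 - k) - m) 0.
    * have zn : z != 0.
        apply/negP=> /eqP z0; apply: hnz; split=> //; split=> //.
        by move/eqP: w0; rewrite z0 mul0r sub0r oppr_eq0 => /eqP.
      constructor 3; split=> //; split=> //.
      by transitivity (m + (z * (1 - k) - m)); [rewrite w0 addr0 | ring].
    * move/eqP: e3; rewrite mulf_eq0 (negbTE w0) orbF => /eqP z0.
      move/eqP: e2; rewrite mulf_eq0 (negbTE w0) /= => /eqP m0.
      by exfalso; apply: hnz.
  + move/eqP: H1; rewrite mulf_eq0 (negbTE u0) /= => /eqP H1.
    have hm : m = - z * (1 + k) - u * q.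
      by apply/eqP; rewrite -subr_eq0 -H1; apply/eqP; ring.
    subst m.
    have e : 2 * ((c * z - u) * (c * z + u)) = 0.
      rewrite -(mulr0 (c ^+ 2)) -H3; field; exact: c0.
    move/eqP: e; rewrite mulf_eq0 pnatr_eq0 /= mulf_eq0 => /orP [/eqP e|/eqP e].
    * have hu : u = c * z by transitivity (c * z - (c * z - u)); [ring | rewrite e; ring].
      have zn : z != 0 by apply: contra u0; rewrite hu => /eqP ->; rewrite mulr0.
      constructor 2; split=> //; split=> //; rewrite hu; ring.
    * have hu : u = - c * z by transitivity ((c * z + u) - c * z); [ring | rewrite e; ring].
      have zn : z != 0 by apply: contra u0; rewrite hu => /eqP ->; rewrite mulr0.
      constructor 1; split=> //; split=> //; rewrite hu; ring.
- case=> [[zn [-> ->]]|[zn [-> ->]]|[zn [-> ->]]]; (split; [|split]); field; try exact: c0; done.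
Qed.

Lemma pencil_solve (k q g c u m z : F) :
  c ^+ 2 * g = 1 -> ~ (u = 0 /\ m = 0 /\ z = 0) ->
  (m ^+ 2 - g * u ^+ 2 + 2 * z * (m * k - u * q) - (q ^+ 2 - g * k ^+ 2) * u ^+ 2 = 0 /\
   z ^+ 2 - g * u ^+ 2 = 0)
  <-> [\/ z != 0 /\ u = - c * z /\ m = - (1 + k - c * q) * z,
          z != 0 /\ u = - c * z /\ m = (1 - k - c * q) * z,
          z != 0 /\ u = c * z /\ m = - (1 + k + c * q) * z
        | z != 0 /\ u = c * z /\ m = (1 - k + c * q) * z].
Proof.
move=> hc hnz.
have c0 : c != 0 by apply/eqP=> c0; move: hc; rewrite c0 expr0n /= mul0r => /eqP; rewrite eq_sym oner_eq0.
have hg : g = c ^-2 by apply: (mulfI (expf_neq0 2 c0)); rewrite hc mulfV // expf_neq0.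
subst g.
split.
- case=> [H1 H2].
  have e : (c * z - u) * (c * z + u) = 0.
    rewrite -(mulr0 (c ^+ 2)) -H2; field; exact: c0.
  have zn : z != 0.
    apply/negP=> /eqP z0; apply: hnz.
    have u0 : u = 0.
      move/eqP: e; rewrite z0 mulr0 sub0r add0r mulNr oppr_eq0 mulf_eq0 orbb.
      by move/eqP.
    split=> //; split=> //.
    have : m ^+ 2 = 0 by rewrite -H1 u0 z0; ring.
    by move/eqP; rewrite expf_eq0 /= => /eqP.
  move/eqP: e; rewrite mulf_eq0 => /orP [/eqP e|/eqP e].
  + have hu : u = c * z by transitivity (c * z - (c * z - u)); [ring | rewrite e; ring].
    subst u.
    have f : (m + k * z - (1 + c * q) * z) * (m + k * z + (1 + c * q) * z) = 0.
      rewrite -H1; field; exact: c0.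
    move/eqP: f; rewrite mulf_eq0 => /orP [/eqP f|/eqP f].
    * constructor 4; split=> //; split=> //.
      by transitivity (m - (m + k * z - (1 + c * q) * z)); [rewrite f; ring | ring].
    * constructor 3; split=> //; split=> //.
      by transitivity (m - (m + k * z + (1 + c * q) * z)); [rewrite f; ring | ring].
  + have hu : u = - c * z by transitivity ((c * z + u) - c * z); [ring | rewrite e; ring].
    subst u.
    have f : (m + k * z - (1 - c * q) * z) * (m + k * z + (1 - c * q) * z) = 0.
      rewrite -H1; field; exact: c0.
    move/eqP: f; rewrite mulf_eq0 => /orP [/eqP f|/eqP f].
    * constructor 2; split=> //; split=> //.
      by transitivity (m - (m + k * z - (1 - c * q) * z)); [rewrite f; ring | ring].
    * constructor 1; split=> //; split=> //.
      by transitivity (m - (m + k * z + (1 - c * q) * z)); [rewrite f; ring | ring].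
- case=> [[zn [-> ->]]|[zn [-> ->]]|[zn [-> ->]]|[zn [-> ->]]]; split; field; try exact: c0; done.
Qed.
End Alg.

Section Ids.
Variable F : numFieldType.
Variables (al be a1 a2 a3 a4 a5 x y z : F).
Let u := uF al be x y.
Let r1 := r1F al be a1 a2.
Let r2 := r2F al be a2 a3.
Let m := mF al be a1 a2 a3 x y.
Let k := kF al be a4 a5.
Let q := qF al be a1 a2 a3 a4 a5.
Let g := gamma1 a1 a2 a3.
Let dl := dlF al be a1 a2 a3.

Lemma two_neq0 : (2 : F) != 0. Proof. by rewrite pnatr_eq0. Qed.

Lemma polar2 (p w : F * F) :
  vscale 2 (polar (fQ al be a1 a2 a3) p w) =
  (ell al be p * (a2 * w.1 + a3 * w.2) + ell al be w * (a2 * p.1 + a3 * p.2),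
   - (ell al be p * (a1 * w.1 + a2 * w.2) + ell al be w * (a1 * p.1 + a2 * p.2))).
Proof.
case: p w => [p1 p2] [w1 w2].
rewrite /polar /vadd /vscale /fQ /ell /=.
have h2 := two_neq0.
congr (_, _); field; done.
Qed.

Lemma id_f :
  let v := kahan_hom (fQ al be a1 a2 a3) (fB al be a4 a5) (fc F) x y z in
  [/\ al * v.1.1 + be * v.1.2 = u * (z * (1 + k) + m + u * q),
      r1 * v.1.1 + r2 * v.1.2 = (z * (1 - k) - m) * (m + u * q) + 2 * g * u ^+ 2 * (1 + k) + z * u * (1 + k) * q
    & v.2 = z ^+ 2 * (1 - k) - z * m - z * u * q - 2 * g * u ^+ 2].
Proof.
rewrite /kahan_hom /kahan_Lh !polar2 /kahan_rh /vadd /vscale /fB /fc /ell /u /m /k /q /g /gamma1 /r1 /r2 /uF /mF /kF /qF /r1F /r2F /=.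
split; ring.
Qed.

Lemma polar2m (p w : F * F) :
  vscale 2 (polar (mfQ al be a1 a2 a3) p w) =
  (- (ell al be p * (a2 * w.1 + a3 * w.2) + ell al be w * (a2 * p.1 + a3 * p.2)),
   ell al be p * (a1 * w.1 + a2 * w.2) + ell al be w * (a1 * p.1 + a2 * p.2)).
Proof.
case: p w => [p1 p2] [w1 w2].
rewrite /polar /vadd /vscale /mfQ /fQ /ell /=.
have h2 := two_neq0.
congr (_, _); field; done.
Qed.

Lemma id_mf :
  let v := kahan_hom (mfQ al be a1 a2 a3) (mfB al be a4 a5) (mfc F) x y z in
  [/\ al * v.1.1 + be * v.1.2 = u * (z * (1 + - k) + - m + u * q),
      - (r1 * v.1.1 + r2 * v.1.2) = (z * (1 - - k) - - m) * (- m + u * q) + 2 * g * u ^+ 2 * (1 + - k) + z * u * (1 + - k) * q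
    & v.2 = z ^+ 2 * (1 - - k) - z * - m - z * u * q - 2 * g * u ^+ 2].
Proof.
rewrite /kahan_hom /kahan_Lh !polar2m /kahan_rh /vadd /vscale /mfB /fB /mfc /fc /ell /u /m /k /q /g /gamma1 /r1 /r2 /uF /mF /kF /qF /r1F /r2F /=.
split; ring.
Qed.

Lemma id_C :
  2 * dl * conCh al be a1 a2 a3 a4 a5 x y z =
  m ^+ 2 - g * u ^+ 2 + 2 * z * (m * k - u * q) - (q ^+ 2 - g * k ^+ 2) * u ^+ 2.
Proof.
rewrite /conCh /gamma2 /dl /dlF /ell /u /m /k /q /g /gamma1 /r1 /r2 /uF /mF /kF /qF /r1F /r2F /=.
have h2 := two_neq0.
field; done.
Qed.

Lemma id_D : conDh al be a1 a2 a3 x y z = z ^+ 2 - g * u ^+ 2.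
Proof. by rewrite /conDh /u /uF /ell. Qed.

Lemma id_x : dl * x = u * r2 - be * m.
Proof. rewrite /dl /u /m /dlF /uF /mF /r1 /r2 /r1F /r2F; ring. Qed.
Lemma id_y : dl * y = al * m - r1 * u.
Proof. rewrite /dl /u /m /dlF /uF /mF /r1 /r2 /r1F /r2F; ring. Qed.
End Ids.

Lemma sing_solve_m (F : numFieldType) (k q g c u m z : F) :
  c ^+ 2 * g = 1 -> ~ (u = 0 /\ m = 0 /\ z = 0) ->
  (u * (z * (1 + - k) + - m + u * q) = 0 /\
   (z * (1 - - k) - - m) * (- m + u * q) + 2 * g * u ^+ 2 * (1 + - k) + z * u * (1 + - k) * q = 0 /\
   z ^+ 2 * (1 - - k) - z * - m - z * u * q - 2 * g * u ^+ 2 = 0)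
  <-> [\/ z != 0 /\ u = - c * z /\ m = (1 - k - c * q) * z,
          z != 0 /\ u = c * z /\ m = (1 - k + c * q) * z
        | z != 0 /\ u = 0 /\ m = - (1 + k) * z].
Proof.
move=> hc hnz.
have hnz' : ~ (u = 0 /\ - m = 0 /\ z = 0).
  by case=> u0 [/eqP]; rewrite oppr_eq0 => /eqP m0 z0; apply: hnz.
rewrite (@sing_solve F (- k) q g c u (- m) z hc hnz').
split; case=> [[zn [hu hm]]|[zn [hu hm]]|[zn [hu hm]]].
- by constructor 1; split=> //; split=> //; rewrite -[m]opprK hm; ring.
- by constructor 2; split=> //; split=> //; rewrite -[m]opprK hm; ring.
- by constructor 3; split=> //; split=> //; rewrite -[m]opprK hm; ring.
- by constructor 1; split=> //; split=> //; rewrite hm; ring.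
- by constructor 2; split=> //; split=> //; rewrite hm; ring.
- by constructor 3; split=> //; split=> //; rewrite hm; ring.
Qed.

Lemma iffT2 {A B C : Prop} : (B <-> C) -> (A <-> B) -> (A <-> C).
Proof. by move=> h2 h1; apply: iff_trans h1 h2. Qed.

Lemma or3_iff {P1 P2 P3 Q1 Q2 Q3 : Prop} :
  (P1 <-> Q1) -> (P2 <-> Q2) -> (P3 <-> Q3) -> ([\/ P1, P2 | P3] <-> [\/ Q1, Q2 | Q3]).
Proof. by move=> [a a'] [b b'] [d d']; split; case=> h; [constructor 1|constructor 2|constructor 3|constructor 1|constructor 2|constructor 3]; auto. Qed.

Lemma or4_iff {P1 P2 P3 P4 Q1 Q2 Q3 Q4 : Prop} :
  (P1 <-> Q1) -> (P2 <-> Q2) -> (P3 <-> Q3) -> (P4 <-> Q4) ->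
  ([\/ P1, P2, P3 | P4] <-> [\/ Q1, Q2, Q3 | Q4]).
Proof. by move=> [a a'] [b b'] [d d'] [e e']; split; case=> h; [constructor 1|constructor 2|constructor 3|constructor 4|constructor 1|constructor 2|constructor 3|constructor 4]; auto. Qed.

Section Main.
Variable F : numFieldType.
Variables (al be a1 a2 a3 a4 a5 c : F).
Hypothesis hc : c ^+ 2 * gamma1 a1 a2 a3 = 1.
Hypothesis hdl : dlF al be a1 a2 a3 != 0.

Let pt := ptF al be a1 a2 a3.
Let u := uF al be.
Let m := mF al be a1 a2 a3.
Let r1 := r1F al be a1 a2.
Let r2 := r2F al be a2 a3.
Let k := kF al be a4 a5.
Let q := qF al be a1 a2 a3 a4 a5.
Let g := gamma1 a1 a2 a3.

Lemma ell_pt (u0 m0 : F) : ell al be (pt u0 m0) = u0.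
Proof.
move: hdl; rewrite /pt /ptF /ell /dlF /r1F /r2F /= => h; field; exact: h.
Qed.

Lemma m_pt (u0 m0 : F) : m (pt u0 m0).1 (pt u0 m0).2 = m0.
Proof.
move: hdl; rewrite /m /mF /pt /ptF /ell /dlF /r1F /r2F /= => h; field; exact: h.
Qed.

Lemma proj_pt (u0 m0 x y z : F) :
  proj_is (pt u0 m0) x y z <-> (z != 0 /\ u x y = u0 * z /\ m x y = m0 * z).
Proof.
split.
- case=> t [t0 [hx [hy hz]]]; subst z.
  split=> //; split.
  + by rewrite hx hy -{3}(ell_pt u0 m0) /u /uF /ell; ring.
  + by rewrite hx hy -{3}(m_pt u0 m0) /m /mF; ring.
- case=> zn [hu hm]; exists z; split=> //; split; [|split=> //].
  + apply: (mulfI hdl).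
    have := id_x F al be a1 a2 a3 x y; rewrite -/(uF al be x y) -/(mF al be a1 a2 a3 x y).
    rewrite -/(u x y) -/(m x y) hu hm => ->.
    move: hdl; rewrite /pt /ptF /dlF /r1F /r2F /= => h; field; exact: h.
  + apply: (mulfI hdl).
    have := id_y F al be a1 a2 a3 x y; rewrite -/(uF al be x y) -/(mF al be a1 a2 a3 x y).
    rewrite -/(u x y) -/(m x y) hu hm => ->.
    move: hdl; rewrite /pt /ptF /dlF /r1F /r2F /= => h; field; exact: h.
Qed.

Lemma nz (x y z : F) : (x, y, z) != (0, 0, 0) -> ~ (u x y = 0 /\ m x y = 0 /\ z = 0).
Proof.
move=> H [u0 [m0 z0]]; move: H.
have hx : x = 0.
  have := id_x F al be a1 a2 a3 x y; rewrite -/(uF al be x y) -/(mF al be a1 a2 a3 x y).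
  rewrite -/(u x y) -/(m x y) u0 m0 ?mul0r ?mulr0 ?subr0 => /eqP.
  by rewrite mulf_eq0 (negbTE hdl) => /eqP.
have hy : y = 0.
  have := id_y F al be a1 a2 a3 x y; rewrite -/(uF al be x y) -/(mF al be a1 a2 a3 x y).
  rewrite -/(u x y) -/(m x y) u0 m0 ?mul0r ?mulr0 ?subr0 => /eqP.
  by rewrite mulf_eq0 (negbTE hdl) => /eqP.
by rewrite hx hy z0 eqxx.
Qed.

Lemma lin2 (R S : F) : (R = 0 /\ S = 0) <-> (al * R + be * S = 0 /\ r1 * R + r2 * S = 0).
Proof.
split; first by case=> -> ->; rewrite !mulr0 addr0.
case=> e1 e2.
have hR : dlF al be a1 a2 a3 * R = 0.
  transitivity (r2 * (al * R + be * S) - be * (r1 * R + r2 * S)).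
    by rewrite /r1 /r2 /dlF /r1F /r2F; ring.
  by rewrite e1 e2; ring.
have hS : dlF al be a1 a2 a3 * S = 0.
  transitivity (al * (r1 * R + r2 * S) - r1 * (al * R + be * S)).
    by rewrite /r1 /r2 /dlF /r1F /r2F; ring.
  by rewrite e1 e2; ring.
move/eqP: hR; move/eqP: hS; rewrite !mulf_eq0 (negbTE hdl) /= => /eqP -> /eqP -> //.
Qed.


Let B1 := pt (- c) (- (1 + k - c * q)).
Let B2 := pt (- c) (1 - k - c * q).
Let B3 := pt c (- (1 + k + c * q)).
Let B4 := pt c (1 - k + c * q).
Let B0 := pt 0 (1 - k).
Let B5 := pt 0 (- (1 + k)).

Lemma sing_f (x y z : F) : (x, y, z) != (0, 0, 0) ->
  kahan_singular (fQ al be a1 a2 a3) (fB al be a4 a5) (fc F) x y z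
  <-> [\/ proj_is B1 x y z, proj_is B3 x y z | proj_is B0 x y z].
Proof.
move=> H.
rewrite /B1 /B3 /B0.
apply: (iffT2 (iff_sym (or3_iff (proj_pt _ _ x y z) (proj_pt _ _ x y z) (proj_pt _ _ x y z)))).
rewrite mul0r.
apply: (iffT2 (sing_solve F k q g c (u x y) (m x y) z hc (nz x y z H))).
have := id_f F al be a1 a2 a3 a4 a5 x y z.
rewrite /kahan_singular.
move: (kahan_hom _ _ _ x y z) => [[R S] T] /= [e1 e2 e3].
rewrite /u /m /k /q /g -e1 -e2 -e3.
have L := lin2 R S.
split=> [[hR [hS hT]]|[h1 [h2 hT]]].
  by have [h1 h2] := (proj1 L) (conj hR hS).
by have [hR hS] := (proj2 L) (conj h1 h2).
Qed.

Lemma sing_mf (x y z : F) : (x, y, z) != (0, 0, 0) ->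
  kahan_singular (mfQ al be a1 a2 a3) (mfB al be a4 a5) (mfc F) x y z
  <-> [\/ proj_is B2 x y z, proj_is B4 x y z | proj_is B5 x y z].
Proof.
move=> H.
rewrite /B2 /B4 /B5.
apply: (iffT2 (iff_sym (or3_iff (proj_pt _ _ x y z) (proj_pt _ _ x y z) (proj_pt _ _ x y z)))).
rewrite mul0r.
apply: (iffT2 (sing_solve_m F k q g c (u x y) (m x y) z hc (nz x y z H))).
have := id_mf F al be a1 a2 a3 a4 a5 x y z.
rewrite /kahan_singular.
move: (kahan_hom _ _ _ x y z) => [[R S] T] /= [e1 e2 e3].
rewrite /u /m /k /q /g -e1 -e2 -e3.
have L := lin2 R S.
split=> [[hR [hS hT]]|[h1 [h2 hT]]].
  have [h1 h2] := (proj1 L) (conj hR hS).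
  by split=> //; split=> //; rewrite h2 oppr0.
have h2' : r1 * R + r2 * S = 0 by move/eqP: h2; rewrite oppr_eq0 => /eqP.
by have [hR hS] := (proj2 L) (conj h1 h2').
Qed.

Lemma pencil (x y z : F) : (x, y, z) != (0, 0, 0) ->
  (conCh al be a1 a2 a3 a4 a5 x y z = 0 /\ conDh al be a1 a2 a3 x y z = 0
   <-> [\/ proj_is B1 x y z, proj_is B2 x y z,
           proj_is B3 x y z | proj_is B4 x y z]).
Proof.
move=> H.
rewrite /B1 /B2 /B3 /B4.
apply: (iffT2 (iff_sym (or4_iff (proj_pt _ _ x y z) (proj_pt _ _ x y z) (proj_pt _ _ x y z) (proj_pt _ _ x y z)))).
apply: (iffT2 (pencil_solve F k q g c (u x y) (m x y) z hc (nz x y z H))).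
rewrite /u /m /k /q /g -id_D -(id_C F al be a1 a2 a3 a4 a5 x y z).
split=> [[h1 h2]|[h1 h2]]; split=> //.
  by rewrite h1 mulr0.
move/eqP: h1; rewrite !mulf_eq0 pnatr_eq0 (negbTE hdl) /=.
by move/eqP.
Qed.

Lemma pt_inj (u0 m0 u1 m1 : F) : pt u0 m0 = pt u1 m1 -> u0 = u1 /\ m0 = m1.
Proof.
move=> e; split; first by rewrite -(ell_pt u0 m0) e ell_pt.
by rewrite -(m_pt u0 m0) e m_pt.
Qed.

Hypothesis hq : q ^+ 2 - g != 0.

Lemma c_neq0 : c != 0.
Proof.
by apply/eqP=> c0; move: hc; rewrite c0 expr0n /= mul0r => /eqP; rewrite eq_sym oner_eq0.
Qed.

Lemma cq2 : (c * q) ^+ 2 != 1.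
Proof.
apply/eqP=> e; move/eqP: hq; apply.
have -> : q ^+ 2 - g = q ^+ 2 * (1 - c ^+ 2 * g) + g * ((c * q) ^+ 2 - 1) by ring.
by rewrite hc e subrr !mulr0 addr0.
Qed.

Lemma main_res : exists B0 B1 B2 B3 B4 B5 : F * F,
      [/\ ell al be B1 = - c, ell al be B3 = c & ell al be B0 = 0]
      /\ [/\ ell al be B2 = - c, ell al be B4 = c & ell al be B5 = 0]
      /\ (forall x y z : F, (x, y, z) != (0, 0, 0) ->
            (kahan_singular (fQ al be a1 a2 a3) (fB al be a4 a5) (fc _) x y z
             <-> [\/ proj_is B1 x y z, proj_is B3 x y z | proj_is B0 x y z]))
      /\ (forall x y z : F, (x, y, z) != (0, 0, 0) ->
            (kahan_singular (mfQ al be a1 a2 a3) (mfB al be a4 a5) (mfc _)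
               x y z
             <-> [\/ proj_is B2 x y z, proj_is B4 x y z | proj_is B5 x y z]))
      /\ (forall x y z : F, (x, y, z) != (0, 0, 0) ->
            (conCh al be a1 a2 a3 a4 a5 x y z = 0 /\
             conDh al be a1 a2 a3 x y z = 0
             <-> [\/ proj_is B1 x y z, proj_is B2 x y z,
                     proj_is B3 x y z | proj_is B4 x y z]))
      /\ uniq [:: B1; B2; B3; B4]
      /\ B0 = vscale (2^-1) (vadd B2 B4)
      /\ B5 = vscale (2^-1) (vadd B1 B3).
Proof.
exists B0, B1, B2, B3, B4, B5.
split; first by rewrite /B1 /B3 /B0 !ell_pt.
split; first by rewrite /B2 /B4 /B5 !ell_pt.
split; first exact: sing_f.
split; first exact: sing_mf.
split; first exact: pencil.
have c0 := c_neq0.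
have h2 := two_neq0 F.
have hcq := cq2.
have cc : - c != c.
  apply/eqP=> e; move/eqP: c0; apply.
  have : 2 * c = 0 by transitivity (c - (- c)); [ring | rewrite e subrr].
  by move/eqP; rewrite mulf_eq0 (negbTE h2) /= => /eqP.
have cc' : c != - c by rewrite eq_sym.
have hp : c * q != 1.
  by apply: contra hcq => /eqP ->; rewrite expr1n.
have hm : c * q != -1.
  by apply: contra hcq => /eqP ->; rewrite sqrrN expr1n.
split.
  rewrite /= !inE !negb_or /B1 /B2 /B3 /B4.
  repeat (apply/andP; split); try done.
  1-6: apply/eqP => /pt_inj [hu hmm].
  - move/negP: hp; apply.
    have : 2 * (1 - c * q) = 0 by transitivity ((1 - k - c * q) - (- (1 + k - c * q))); [ring | rewrite -hmm subrr].
    by move/eqP; rewrite mulf_eq0 (negbTE h2) /= subr_eq0 eq_sym.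
  - by rewrite hu eqxx in cc.
  - by rewrite hu eqxx in cc.
  - by rewrite hu eqxx in cc.
  - by rewrite hu eqxx in cc.
  - move/negP: hm; apply.
    have : 2 * (1 + c * q) = 0 by transitivity ((1 - k + c * q) - (- (1 + k + c * q))); [ring | rewrite -hmm subrr].
    by move/eqP; rewrite mulf_eq0 (negbTE h2) /= addrC addr_eq0.
move: hdl; rewrite /dlF /r1F /r2F => hd.
split; rewrite /B0 /B1 /B2 /B3 /B4 /B5 /pt /ptF /vscale /vadd /dlF /r1F /r2F /=;
  congr (_, _); field; done.
Qed.

End Main.

Section Final.
Variable R : realType.

Definition Xo (n : nat) (h : (n < 7)%N) : {mpoly R[i][7]} := 'X_(Ordinal h).

Definition Ppoly : {mpoly R[i][7]} :=
  let al := Xo 0 isT in let be := Xo 1 isT in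
  let a1 := Xo 2 isT in let a2 := Xo 3 isT in
  let a3 := Xo 4 isT in let a4 := Xo 5 isT in
  let a5 := Xo 6 isT in
  (al * (al * a3 - be * a2) - be * (al * a2 - be * a1)) *
  ((al * (a2 * a5 - a3 * a4) + be * (a2 * a4 - a1 * a5)) *
   (al * (a2 * a5 - a3 * a4) + be * (a2 * a4 - a1 * a5)) - (a2 * a2 - a1 * a3)).

Lemma evalP (al be a1 a2 a3 a4 a5 : R[i]) :
  Ppoly.@[params al be a1 a2 a3 a4 a5] =
  dlF al be a1 a2 a3 * (qF al be a1 a2 a3 a4 a5 ^+ 2 - gamma1 a1 a2 a3).
Proof.
rewrite /Ppoly /Xo; cbv zeta; rewrite !(mevalM, mevalB, mevalD, mevalXU) /params /=.
rewrite /dlF /qF /gamma1 /r1F /r2F; ring.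
Qed.

End Final.

Theorem theorem3 (R : realType) :
  exists P : {mpoly R[i] [7]}, P != 0 /\
  forall al be a1 a2 a3 a4 a5 c : R[i],
    (al != 0 \/ be != 0) ->
    conC_nonsingular al be a1 a2 a3 a4 a5 ->
    c ^+ 2 * gamma1 a1 a2 a3 = 1 ->
    P.@[params al be a1 a2 a3 a4 a5] != 0 ->
    exists B0 B1 B2 B3 B4 B5 : R[i] * R[i],
      [/\ ell al be B1 = - c, ell al be B3 = c & ell al be B0 = 0]
      /\ [/\ ell al be B2 = - c, ell al be B4 = c & ell al be B5 = 0]
      /\ (forall x y z : R[i], (x, y, z) != (0, 0, 0) ->
            (kahan_singular (fQ al be a1 a2 a3) (fB al be a4 a5) (fc _) x y z
             <-> [\/ proj_is B1 x y z, proj_is B3 x y z | proj_is B0 x y z]))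
      /\ (forall x y z : R[i], (x, y, z) != (0, 0, 0) ->
            (kahan_singular (mfQ al be a1 a2 a3) (mfB al be a4 a5) (mfc _)
               x y z
             <-> [\/ proj_is B2 x y z, proj_is B4 x y z | proj_is B5 x y z]))
      /\ (forall x y z : R[i], (x, y, z) != (0, 0, 0) ->
            (conCh al be a1 a2 a3 a4 a5 x y z = 0 /\
             conDh al be a1 a2 a3 x y z = 0
             <-> [\/ proj_is B1 x y z, proj_is B2 x y z,
                     proj_is B3 x y z | proj_is B4 x y z]))
      /\ uniq [:: B1; B2; B3; B4]
      /\ B0 = vscale (2^-1) (vadd B2 B4)
      /\ B5 = vscale (2^-1) (vadd B1 B3).
Proof.
exists (Ppoly R); split.
  apply/eqP=> P0.
  have := @evalP R 1 0 (-1) 0 1 0 0.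
  rewrite P0 meval0 /dlF /qF /gamma1 /r1F /r2F.
  have -> : (1 * (1 * 1 - 0 * 0) - 0 * (1 * 0 - 0 * -1)) *
    ((1 * (0 * 0 - 1 * 0) + 0 * (0 * 0 - -1 * 0)) ^+ 2 - (0 ^+ 2 - -1 * 1)) = - 1 :> R[i]
    by ring.
  by move/eqP; rewrite eq_sym oppr_eq0 oner_eq0.
move=> al be a1 a2 a3 a4 a5 c _ _ hc.
rewrite evalP mulf_eq0 negb_or => /andP [hdl hq].
exact: (@main_res _ _ _ _ _ _ _ _ _ hc hdl hq).
Qed.
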